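(* Let $\mathbb{F}$ be an algebraically closed field of characteristic $0$, $D$ an $\mathbb{F}$-vector space with $\dim D=3$, and $\Gamma\subseteq D^{\ast}$ an additive subgroup with $\Gamma\simeq\mathbb{Z}^3$ and $\bigcap_{\alpha\in\Gamma}\ker\alpha=\{0\}$. Let $M=\bigoplus_{\theta\in\Gamma}M_\theta$ be a $\Gamma$-graded $\mathcal{S}(\Gamma,D)$-module with $\dim M_\theta=1$, $M_\theta=\mathbb{F}w_\theta$. Let $\sigma,\rho\in\Gamma$ be $\mathbb{Z}$-linearly independent, let $\tilde\partial_1$ be a nonzero vector of the one-dimensional space $\ker\sigma\cap\ker\rho$, $\tilde\partial_2\in\ker\sigma\setminus\mathbb{F}\tilde\partial_1$ and $\tilde\partial_3\in\ker\rho\setminus\mathbb{F}\tilde\partial_1$. Suppose that for some $\nu\in\Gamma$, $x^{-\sigma}\tilde\partial_1.x^{\sigma}\tilde\partial_1.w_\nu\neq0$ and $x^{-\rho}\tilde\partial_1.x^{\rho}\tilde\partial_1.w_\nu\neq0$. Let $a_1,b_1$ be any nonzero scalars with $x^{-\sigma}\tilde\partial_1.x^{\sigma}\tilde\partial_1.w_\nu=a_1^2w_\nu$ and $x^{-\rho}\tilde\partial_1.x^{\rho}\tilde\partial_1.w_\nu=b_1^2w_\nu$. Then there exist nonzero $v_{\nu+i\sigma+k\rho}\in M_{\nu+i\sigma+k\rho}$ ($i,k\in\mathbb{Z}$) such that $x^{\pm\sigma}\tilde\partial_1.v_{\nu+i\sigma+k\rho}=a_1v_{\nu+(i\pm1)\sigma+k\rho}$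 and $x^{\pm\rho}\tilde\partial_1.v_{\nu+i\sigma+k\rho}=b_1v_{\nu+i\sigma+(k\pm1)\rho}$ for all $i,k\in\mathbb{Z}$. Moreover, for any such family, writing $x^{\sigma}\tilde\partial_2.v_\nu=a_2v_{\nu+\sigma}$, $x^{\rho}\tilde\partial_3.v_\nu=a_3v_{\nu+\rho}$ and $x^{\sigma+\rho}\tilde\partial_1.v_\nu=dv_{\nu+\sigma+\rho}$, one has for all $i,k\in\mathbb{Z}$: $x^{\sigma+\rho}\tilde\partial_1.v_{\nu+i\sigma+k\rho}=dv_{\nu+(i+1)\sigma+(k+1)\rho}$, $x^{\pm\sigma}\tilde\partial_2.v_{\nu+i\sigma+k\rho}=\big(a_2+k\rho(\tilde\partial_2)\tfrac{d}{b_1}\big)v_{\nu+(i\pm1)\sigma+k\rho}$, $x^{\pm\rho}\tilde\partial_3.v_{\nu+i\sigma+k\rho}=\big(a_3+i\sigma(\tilde\partial_3)\tfrac{d}{a_1}\big)v_{\nu+i\sigma+(k\pm1)\rho}$, and $a_1^2=b_1^2=d^2$.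
   Context: $\mathcal{S}(\Gamma,D)$ is the Lie algebra spanned by $x^\alpha\partial$ with $\alpha\in\Gamma\setminus\{0\}$, $\partial\in\ker\alpha$ (linear in $\partial$), with bracket $[x^\alpha\partial_1,x^\beta\partial_2]=x^{\alpha+\beta}(\beta(\partial_1)\partial_2-\alpha(\partial_2)\partial_1)$. A $\Gamma$-graded module satisfies $x^\alpha\partial.M_\theta\subseteq M_{\alpha+\theta}$. *)

(* Defs.v *)
From HB Require Import structures.
From mathcomp Require Import all_boot all_order all_algebra.
Set Implicit Arguments. Unset Strict Implicit. Unset Printing Implicit Defensive.
Import Order.TTheory GRing.Theory Num.Theory.
Local Open Scope ring_scope.

(* D = F^3, realised as row vectors 'rV[F]_3 (any 3-dim space is isomorphic).
   Gamma ~ Z^3 is realised through coordinates: an element of Gamma is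
   n : 'rV[int]_3, and it denotes the functional
      pair E n : D -> F,  pair E n d = \sum_i n_i * (d *m E)_i,
   i.e. n_1 g_1 + n_2 g_2 + n_3 g_3 where g_i (the i-th column of E) are
   three Z-linearly independent generators of Gamma in D^*. *)

Definition pair (F : fieldType) (E : 'M[F]_3) (a : 'rV[int]_3) (d : 'rV[F]_3) : F :=
  \sum_(i < 3) (a 0 i)%:~R * (d *m E) 0 i.

(* The columns of E are Z-linearly independent (so Gamma = sum Z g_i ~ Z^3). *)
Definition Zindep_gens (F : fieldType) (E : 'M[F]_3) : Prop :=
  forall c : 'rV[int]_3, (forall d : 'rV[F]_3, pair E c d = 0) -> c = 0.

Definition separating (F : fieldType) (E : 'M[F]_3) : Prop :=
  forall d : 'rV[F]_3, (forall a : 'rV[int]_3, pair E a d = 0) -> d = 0.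

Definition homog (F : fieldType) (M : lmodType F) (w : 'rV[int]_3 -> M)
  (theta : 'rV[int]_3) (m : M) : Prop := exists c : F, m = c *: w theta.

(* [act a d m] is the action  x^a d . m  of the generator x^a d
   (a in Gamma \ {0}, d in ker a) of S(Gamma, D) on m in M. *)
Definition graded_S_module (F : fieldType) (E : 'M[F]_3) (M : lmodType F)
  (w : 'rV[int]_3 -> M) (act : 'rV[int]_3 -> 'rV[F]_3 -> M -> M) : Prop :=
  (
   (forall a (d1 d2 : 'rV[F]_3) (c : F) (m : M), a != 0 ->
      pair E a d1 = 0 -> pair E a d2 = 0 ->
      act a (c *: d1 + d2) m = c *: act a d1 m + act a d2 m) /\
   (forall a (d : 'rV[F]_3) (c : F) (m1 m2 : M),
      act a d (c *: m1 + m2) = c *: act a d m1 + act a d m2) /\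
   (* representation of the bracket
      [x^a d1, x^b d2] = x^(a+b) (b(d1) d2 - a(d2) d1)  (which is 0 if a+b=0) *)
   (forall a b (d1 d2 : 'rV[F]_3) (m : M), a != 0 -> b != 0 ->
      pair E a d1 = 0 -> pair E b d2 = 0 ->
      act a d1 (act b d2 m) - act b d2 (act a d1 m) =
        (if a + b == 0 then 0
         else act (a + b) (pair E b d1 *: d2 - pair E a d2 *: d1) m)) /\
   (forall a (d : 'rV[F]_3) theta, a != 0 -> pair E a d = 0 ->
      homog w (a + theta) (act a d (w theta))) /\
   (forall theta, w theta != 0) /\
   (forall (s : seq 'rV[int]_3) (c : 'rV[int]_3 -> F), uniq s ->
      \sum_(t <- s) c t *: w t = 0 -> forall t, t \in s -> c t = 0) /\
   (forall m : M, exists (s : seq 'rV[int]_3) (c : 'rV[int]_3 -> F),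
      m = \sum_(t <- s) c t *: w t)).

Definition gidx (nu sigma rho : 'rV[int]_3) (i k : int) : 'rV[int]_3 :=
  nu + sigma *~ i + rho *~ k.

Definition good_family (F : fieldType) (M : lmodType F) (w : 'rV[int]_3 -> M)
  (act : 'rV[int]_3 -> 'rV[F]_3 -> M -> M) (nu sigma rho : 'rV[int]_3)
  (d1 : 'rV[F]_3) (a1 b1 : F) (v : int -> int -> M) : Prop :=
  forall i k : int,
  [/\ v i k != 0 /\ homog w (gidx nu sigma rho i k) (v i k),
      act sigma d1 (v i k) = a1 *: v (i + 1) k,
      act (- sigma) d1 (v i k) = a1 *: v (i - 1) k,
      act rho d1 (v i k) = b1 *: v i (k + 1) &
      act (- rho) d1 (v i k) = b1 *: v i (k - 1)].

(* Main.v *)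
Require Import Defs.
From HB Require Import structures.
From mathcomp Require Import all_boot all_order all_algebra.
From mathcomp Require Import ring zify.
Import Order.TTheory GRing.Theory Num.Theory.
Local Open Scope ring_scope.

Unset Implicit Arguments. Set Strict Implicit.

Lemma sum3 (R : nmodType) (f : 'I_3 -> R) : \sum_(i < 3) f i = f 0 + f 1 + f 2.
Proof.
rewrite !big_ord_recl big_ord0 addr0 addrA.
by congr (_ + f _ + f _); apply: val_inj.
Qed.

Lemma pairE (F : fieldType) (E : 'M[F]_3) a d :
  pair E a d = (a 0 0)%:~R * (d *m E) 0 0 + (a 0 1)%:~R * (d *m E) 0 1
             + (a 0 2)%:~R * (d *m E) 0 2.
Proof. by rewrite /pair sum3. Qed.

Lemma intr_char0 (F : fieldType) (z : int) : [pchar F] =i pred0 -> z%:~R = 0 :> F -> z = 0.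
Proof.
move=> /pcharf0P ch; case: z => n /=.
  by move/eqP; rewrite -[n%:~R]/(n%:R) ch => /eqP ->.
by rewrite NegzE rmorphN /= => /eqP; rewrite oppr_eq0 -[_%:~R]/(_%:R) ch.
Qed.

Lemma ord3P (P : 'I_3 -> Prop) : P 0 -> P 1 -> P 2 -> forall i, P i.
Proof.
move=> h0 h1 h2 [[|[|[|i]]] hi] //.
- by have -> : Ordinal hi = 0 by apply: val_inj.
- by have -> : Ordinal hi = 1 by apply: val_inj.
- by have -> : Ordinal hi = 2 by apply: val_inj.
Qed.

Unset Implicit Arguments. Set Strict Implicit.

Lemma mxzE (R : zmodType) m n (A : 'M[R]_(m,n)) z i j : (A *~ z) i j = A i j *~ z.
Proof.
have hn k : (A *+ k) i j = A i j *+ k.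
  by elim: k => [|k IH]; rewrite ?mulr0n ?mxE // !mulrS mxE IH.
case: z => k; first by rewrite -!pmulrn hn.
by rewrite !NegzE !mulrNz mxE -!pmulrn hn.
Qed.

Lemma rv3P (R : Type) (x y : 'rV[R]_3) : x 0 0 = y 0 0 -> x 0 1 = y 0 1 -> x 0 2 = y 0 2 -> x = y.
Proof.
move=> h0 h1 h2; apply/matrixP => i j; rewrite (ord1 i).
by move: j; apply: ord3P.
Qed.

Lemma fld1 (F : fieldType) (a b p q : F) : b != 0 -> q != 0 -> a * p / q = a / b * (b * p / q).
Proof. by move=> hb hq; field; rewrite hb hq. Qed.

Lemma ker2 (F : fieldType) (E : 'M[F]_3) (sigma rho : 'rV[int]_3) (d1 d : 'rV[F]_3) :
  [pchar F] =i pred0 -> separating E ->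
  (forall p q : int, sigma *~ p + rho *~ q = 0 -> p = 0 /\ q = 0) ->
  d1 != 0 -> pair E sigma d1 = 0 -> pair E rho d1 = 0 ->
  pair E sigma d = 0 -> pair E rho d = 0 -> exists c, d = c *: d1.
Proof.
move=> ch sep ind d1nz.
have sep0 (x : 'rV[F]_3) : x *m E = 0 -> x = 0.
  move=> hx; apply: (sep x) => a; rewrite /pair hx big1 // => i _; by rewrite mxE mulr0.
rewrite !pairE.
set u := d *m E; set e := d1 *m E.
set s0 := (sigma 0 0)%:~R; set s1 := (sigma 0 1)%:~R; set s2 := (sigma 0 2)%:~R.
set r0 := (rho 0 0)%:~R; set r1 := (rho 0 1)%:~R; set r2 := (rho 0 2)%:~R.
move=> es er us ur.
set n0 := s1 * r2 - s2 * r1; set n1 := s2 * r0 - s0 * r2; set n2 := s0 * r1 - s1 * r0.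
have cross (x : 'rV[F]_3) : s0 * x 0 0 + s1 * x 0 1 + s2 * x 0 2 = 0 ->
    r0 * x 0 0 + r1 * x 0 1 + r2 * x 0 2 = 0 ->
    [/\ x 0 1 * n2 = x 0 2 * n1, x 0 2 * n0 = x 0 0 * n2 & x 0 0 * n1 = x 0 1 * n0].
  move=> hs hr; split; apply/eqP; rewrite -subr_eq0; apply/eqP.
  - have -> : x 0 1 * n2 - x 0 2 * n1 = s0 * (r0 * x 0 0 + r1 * x 0 1 + r2 * x 0 2)
        - r0 * (s0 * x 0 0 + s1 * x 0 1 + s2 * x 0 2) by rewrite /n1 /n2; ring.
    by rewrite hs hr !mulr0 subrr.
  - have -> : x 0 2 * n0 - x 0 0 * n2 = s1 * (r0 * x 0 0 + r1 * x 0 1 + r2 * x 0 2)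
        - r1 * (s0 * x 0 0 + s1 * x 0 1 + s2 * x 0 2) by rewrite /n0 /n2; ring.
    by rewrite hs hr !mulr0 subrr.
  - have -> : x 0 0 * n1 - x 0 1 * n0 = s2 * (r0 * x 0 0 + r1 * x 0 1 + r2 * x 0 2)
        - r2 * (s0 * x 0 0 + s1 * x 0 1 + s2 * x 0 2) by rewrite /n0 /n1; ring.
    by rewrite hs hr !mulr0 subrr.
have [cu1 cu2 cu3] := cross u us ur.
have [ce1 ce2 ce3] := cross e es er.
have enz : e != 0.
  by apply: contra d1nz => /eqP /sep0 ->.
have nnz : ~ (n0 = 0 /\ n1 = 0 /\ n2 = 0).
  move=> [h0 [h1 h2]].
  have iz (a b c f : int) : a%:~R * b%:~R - c%:~R * f%:~R = 0 :> F -> a * b = c * f.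
    move=> h; apply/eqP; rewrite -subr_eq0; apply/eqP; apply: (@intr_char0 F _ ch).
    by rewrite intrB !intrM.
  have {}h0 := iz _ _ _ _ h0; have {}h1 := iz _ _ _ _ h1; have {}h2 := iz _ _ _ _ h2.
  have snz : sigma != 0.
    apply/eqP => s0'; have := ind 1 0; rewrite s0' mul0rz mulr0z addr0 => /(_ erefl).
    by case.
  have key (j : 'I_3) : sigma 0 j != 0 ->
      (forall i, sigma 0 i * rho 0 j = rho 0 i * sigma 0 j) -> False.
    move=> hj hi; have := ind (rho 0 j) (- sigma 0 j).
    case.
      apply/matrixP => a i; rewrite (ord1 a) !mxE !mxzE ?mxE.
      by rewrite -(mulrzr (sigma 0 i)) -(mulrzr (rho 0 i)) !intz hi mulrN subrr.
    by move=> _ /eqP; rewrite oppr_eq0 (negbTE hj).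
  have [z0|z0] := eqVneq (sigma 0 0) 0.
    have [z1|z1] := eqVneq (sigma 0 1) 0.
      have [z2|z2] := eqVneq (sigma 0 2) 0.
        by move/eqP: snz; apply; apply: rv3P; rewrite ?z0 ?z1 ?z2 !mxE.
      by apply: (key 2 z2); apply: ord3P; first [by rewrite mulrC | by rewrite h0 mulrC | by rewrite -h0 mulrC | by rewrite h1 mulrC | by rewrite -h1 mulrC | by rewrite h2 mulrC | by rewrite -h2 mulrC].
    by apply: (key 1 z1); apply: ord3P; first [by rewrite mulrC | by rewrite h0 mulrC | by rewrite -h0 mulrC | by rewrite h1 mulrC | by rewrite -h1 mulrC | by rewrite h2 mulrC | by rewrite -h2 mulrC].
  by apply: (key 0 z0); apply: ord3P; first [by rewrite mulrC | by rewrite h0 mulrC | by rewrite -h0 mulrC | by rewrite h1 mulrC | by rewrite -h1 mulrC | by rewrite h2 mulrC | by rewrite -h2 mulrC].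
have fin (c : F) : u 0 0 = c * e 0 0 -> u 0 1 = c * e 0 1 -> u 0 2 = c * e 0 2 ->
    exists c, d = c *: d1.
  move=> h0 h1 h2; exists c; apply/eqP; rewrite -subr_eq0; apply/eqP; apply: sep0.
  rewrite mulmxBl -scalemxAl -/u -/e; clearbody u e.
  by apply: rv3P; rewrite !mxE ?h0 ?h1 ?h2 subrr.
have enz3 : ~ (e 0 0 = 0 /\ e 0 1 = 0 /\ e 0 2 = 0).
  by move=> [h0 [h1 h2]]; apply: (negP enz); apply/eqP; apply: rv3P; rewrite ?h0 ?h1 ?h2 mxE.
have [z0|z0] := eqVneq n0 0.
  have [z1|z1] := eqVneq n1 0.
    have [z2|z2] := eqVneq n2 0; first by case: nnz.
    have f1 x : x 0 1 = x 0 2 * n1 / n2 -> x 0 0 = x 0 2 * n0 / n2 -> True by [].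
    have eu1 : u 0 1 = u 0 2 * n1 / n2 by rewrite -cu1 mulfK.
    have eu0 : u 0 0 = u 0 2 * n0 / n2 by rewrite cu2 mulfK.
    have ee1 : e 0 1 = e 0 2 * n1 / n2 by rewrite -ce1 mulfK.
    have ee0 : e 0 0 = e 0 2 * n0 / n2 by rewrite ce2 mulfK.
    have eb : e 0 2 != 0.
      by apply/eqP => hb; apply: enz3; rewrite ee1 ee0 hb !mul0r.
    by apply: (fin (u 0 2 / e 0 2)); rewrite ?eu1 ?eu0 ?ee1 ?ee0 ?divfK //; apply: fld1.
  have eu0 : u 0 0 = u 0 1 * n0 / n1 by rewrite -cu3 mulfK.
  have eu2 : u 0 2 = u 0 1 * n2 / n1 by rewrite cu1 mulfK.
  have ee0 : e 0 0 = e 0 1 * n0 / n1 by rewrite -ce3 mulfK.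
  have ee2 : e 0 2 = e 0 1 * n2 / n1 by rewrite ce1 mulfK.
  have eb : e 0 1 != 0.
    by apply/eqP => hb; apply: enz3; rewrite ee2 ee0 hb !mul0r.
  by apply: (fin (u 0 1 / e 0 1)); rewrite ?eu2 ?eu0 ?ee2 ?ee0 ?divfK //; apply: fld1.
have eu1 : u 0 1 = u 0 0 * n1 / n0 by rewrite cu3 mulfK.
have eu2 : u 0 2 = u 0 0 * n2 / n0 by rewrite -cu2 mulfK.
have ee1 : e 0 1 = e 0 0 * n1 / n0 by rewrite ce3 mulfK.
have ee2 : e 0 2 = e 0 0 * n2 / n0 by rewrite -ce2 mulfK.
have eb : e 0 0 != 0.
  by apply/eqP => hb; apply: enz3; rewrite ee2 ee1 hb !mul0r.
by apply: (fin (u 0 0 / e 0 0)); rewrite ?eu2 ?eu1 ?ee2 ?ee1 ?divfK //; apply: fld1.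
Qed.

Unset Implicit Arguments. Set Strict Implicit.

Lemma pairD (F : fieldType) (E : 'M[F]_3) a b d : pair E (a + b) d = pair E a d + pair E b d.
Proof. by rewrite /pair -big_split; apply: eq_bigr => i _; rewrite mxE intrD mulrDl. Qed.

Lemma pairN (F : fieldType) (E : 'M[F]_3) a d : pair E (- a) d = - pair E a d.
Proof. by rewrite /pair -sumrN; apply: eq_bigr => i _; rewrite mxE intrN mulNr. Qed.

Lemma pairZD (F : fieldType) (E : 'M[F]_3) a c d1 d2 :
  pair E a (c *: d1 + d2) = c * pair E a d1 + pair E a d2.
Proof.
rewrite /pair mulmxDl -scalemxAl big_distrr -big_split; apply: eq_bigr => i _.
rewrite !mxE /=; ring.
Qed.

Lemma pairB (F : fieldType) (E : 'M[F]_3) a d1 d2 :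
  pair E a (d1 - d2) = pair E a d1 - pair E a d2.
Proof.
by rewrite -scaleN1r addrC pairZD mulN1r addrC.
Qed.

Lemma pair0 (F : fieldType) (E : 'M[F]_3) a : pair E a 0 = 0.
Proof. by rewrite /pair big1 // => i _; rewrite mul0mx mxE mulr0. Qed.

Lemma pairZ (F : fieldType) (E : 'M[F]_3) a c d : pair E a (c *: d) = c * pair E a d.
Proof. by rewrite -[c *: d]addr0 pairZD pair0 addr0. Qed.

Lemma coef_eq (F : fieldType) (V : lmodType F) (s t : F) (u : V) :
  u != 0 -> s *: u = t *: u -> s = t.
Proof.
move=> hu /eqP; rewrite -subr_eq0 -scalerBl scaler_eq0 (negbTE hu) orbF subr_eq0.
by move/eqP.
Qed.

Lemma fchoice2 (V : eqType) (F : choiceType) (f : int -> int -> V) (g : F -> int -> int -> V) :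
  (forall i k, exists s, f i k = g s i k) -> exists c : int -> int -> F, forall i k, f i k = g (c i k) i k.
Proof.
move=> h.
have h' : forall i k, exists s, f i k == g s i k.
  by move=> i k; have [s hs] := h i k; exists s; rewrite hs.
by exists (fun i k => xchoose (h' i k)) => i k; apply/eqP; apply: (xchooseP (h' i k)).
Qed.

Lemma lin_ind (R : fieldType) (f : int -> R) (dl : R) :
  (forall i, f (i + 1) = f i + dl) -> forall i, f i = f 0 + i%:~R * dl.
Proof.
move=> h; elim/int_rec.
- by rewrite mul0r addr0.
- move=> n IH; rewrite intS addrC h IH intrD mulrDl mul1r addrA //.
- move=> n IH; have := h (- (n.+1 : int)).
  have -> : - (n.+1 : int) + 1 = - (n%:Z) by lia.
  rewrite IH => e.
  apply: (addIr dl); rewrite -e !intrN intS intrD; ring.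
Qed.

Unset Implicit Arguments. Set Strict Implicit.
Set Implicit Arguments.

Lemma addI0 (V : zmodType) (x : V) : x = x + x -> x = 0.
Proof. by move=> h; apply: (@addrI _ x); rewrite addr0 -h. Qed.

Lemma actZ (F : fieldType) (E : 'M[F]_3) (M : lmodType F) w act
  (G : graded_S_module E w act) a d c (m : M) : act a d (c *: m) = c *: act a d m.
Proof.
case: G => [lind [linm _]].
have h0 : act a d 0 = 0.
  apply: addI0; have := linm a d 1 0 0; rewrite !scale1r addr0; exact.
by have := linm a d c m 0; rewrite !addr0 h0 addr0.
Qed.

Lemma actD (F : fieldType) (E : 'M[F]_3) (M : lmodType F) w act
  (G : graded_S_module E w act) a d (m1 m2 : M) : act a d (m1 + m2) = act a d m1 + act a d m2.
Proof. by case: G => [lind [linm _]]; have := linm a d 1 m1 m2; rewrite !scale1r. Qed.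

Lemma actB (F : fieldType) (E : 'M[F]_3) (M : lmodType F) w act
  (G : graded_S_module E w act) a d (m1 m2 : M) : act a d (m1 - m2) = act a d m1 - act a d m2.
Proof.
case: G => [lind [linm _]]; have := linm a d (-1) m2 m1.
by rewrite !scaleN1r addrC => ->; rewrite addrC.
Qed.

Lemma act0d (F : fieldType) (E : 'M[F]_3) (M : lmodType F) w act
  (G : graded_S_module E w act) a (m : M) : a != 0 -> act a 0 m = 0.
Proof.
case: G => [lind _] ha; apply: addI0.
have := lind a 0 0 1 m ha (pair0 _ E a) (pair0 _ E a); rewrite !scale1r addr0; exact.
Qed.

Lemma actZd (F : fieldType) (E : 'M[F]_3) (M : lmodType F) w act
  (G : graded_S_module E w act) a c d (m : M) : a != 0 -> pair E a d = 0 ->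
  act a (c *: d) m = c *: act a d m.
Proof.
move=> ha hd; have := (proj1 G) a d 0 c m ha hd (pair0 _ E a).
by rewrite !addr0 (act0d G) // addr0.
Qed.

Lemma comm (F : fieldType) (E : 'M[F]_3) (M : lmodType F) w act
  (G : graded_S_module E w act) a b d1 d2 (m : M) : a != 0 -> b != 0 ->
  pair E a d1 = 0 -> pair E b d2 = 0 -> pair E b d1 = 0 -> pair E a d2 = 0 ->
  act a d1 (act b d2 m) = act b d2 (act a d1 m).
Proof.
move=> ha hb h1 h2 h3 h4; have := (proj1 (proj2 (proj2 G))) a b d1 d2 m ha hb h1 h2.
case: ifP => hab; first by move/eqP; rewrite subr_eq0 => /eqP.
rewrite h3 h4 !scale0r subrr (act0d G) ?hab //; first by move/eqP; rewrite subr_eq0 => /eqP.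
Qed.

Lemma brk1 (F : fieldType) (E : 'M[F]_3) (M : lmodType F) w act
  (G : graded_S_module E w act) a b d1 d2 (m : M) : a != 0 -> b != 0 -> a + b != 0 ->
  pair E a d1 = 0 -> pair E b d1 = 0 -> pair E b d2 = 0 ->
  act a d1 (act b d2 m) - act b d2 (act a d1 m) = - pair E a d2 *: act (a + b) d1 m.
Proof.
move=> ha hb hab h1 h2 h3; rewrite ((proj1 (proj2 (proj2 G))) a b d1 d2 m ha hb h1 h3).
rewrite (negbTE hab) h2 scale0r sub0r -scaleNr (actZd G) // pairD h1 h2 addr0 //.
Qed.

Lemma brkg (F : fieldType) (E : 'M[F]_3) (M : lmodType F) w act
  (G : graded_S_module E w act) a b d1 d2 (m : M) : a != 0 -> b != 0 -> a + b != 0 ->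
  pair E a d1 = 0 -> pair E b d2 = 0 ->
  act a d1 (act b d2 m) - act b d2 (act a d1 m) =
  act (a + b) (pair E b d1 *: d2 - pair E a d2 *: d1) m.
Proof.
move=> ha hb hab h1 h3; rewrite ((proj1 (proj2 (proj2 G))) a b d1 d2 m ha hb h1 h3).
by rewrite (negbTE hab).
Qed.

Lemma homog_act (F : fieldType) (E : 'M[F]_3) (M : lmodType F) w act
  (G : graded_S_module E w act) a d theta (m : M) : a != 0 -> pair E a d = 0 ->
  homog w theta m -> homog w (a + theta) (act a d m).
Proof.
move=> ha hd [c ->]; rewrite (actZ G).
have [c' ->] := (proj1 (proj2 (proj2 (proj2 G)))) a d theta ha hd.
by exists (c * c'); rewrite scalerA.
Qed.

Lemma shift_coef (F : fieldType) (M : lmodType F) (w : 'rV[int]_3 -> M) theta (m u : M) :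
  homog w theta m -> homog w theta u -> u != 0 -> exists s, m = s *: u.
Proof.
move=> [c ->] [c' hu] unz.
have c'nz : c' != 0 by apply: contra unz; rewrite hu => /eqP ->; rewrite scale0r.
by exists (c / c'); rewrite hu scalerA divfK.
Qed.

Lemma coef0 (F : fieldType) (V : lmodType F) (s : F) (u : V) :
  u != 0 -> s *: u = 0 -> s = 0.
Proof. by move=> hu /eqP; rewrite scaler_eq0 (negbTE hu) orbF => /eqP. Qed.

Lemma comm_shift (F : fieldType) (M : lmodType F) (v : int -> int -> M)
  (O P : M -> M) (cO cP : int -> int -> F) (p q p' q' : int) :
  (forall c m, O (c *: m) = c *: O m) -> (forall c m, P (c *: m) = c *: P m) ->
  (forall i k, O (v i k) = cO i k *: v (i + p) (k + q)) ->
  (forall i k, P (v i k) = cP i k *: v (i + p') (k + q')) ->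
  forall i k, P (O (v i k)) - O (P (v i k)) =
    (cO i k * cP (i + p) (k + q) - cP i k * cO (i + p') (k + q')) *: v (i + p + p') (k + q + q').
Proof.
move=> lO lP hO hP i k.
rewrite [O (v i k)]hO lP [P (v (i + p) _)]hP [P (v i k)]hP lO [O (v (i + p') _)]hO.
by rewrite !scalerA scalerBl (addrAC i p' p) (addrAC k q' q).
Qed.
Arguments comm_shift {F M v O P cO cP p q p' q'}.


Unset Implicit Arguments. Set Strict Implicit.
Set Implicit Arguments.

Lemma mxzEi m n (A : 'M[int]_(m,n)) z i j : (A *~ z) i j = A i j * z.
Proof.
have hn k : (A *+ k) i j = A i j *+ k.
  by elim: k => [|k IH]; rewrite ?mulr0n ?mxE // !mulrS mxE IH.
have h1 : (A *~ z) i j = A i j *~ z.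
  case: z => k; first by rewrite -!pmulrn hn.
  by rewrite !NegzE !mulrNz mxE -!pmulrn hn.
by rewrite h1 -(mulrzr (A i j)) intz.
Qed.

Lemma gidx_shift (nu sigma rho : 'rV[int]_3) p q i k :
  sigma *~ p + rho *~ q + gidx nu sigma rho i k = gidx nu sigma rho (i + p) (k + q).
Proof. by apply/matrixP => x y; rewrite /gidx !mxE !mxzEi; ring. Qed.

Lemma ex_coef (F : fieldType) (E : 'M[F]_3) (M : lmodType F) w act
  (G : graded_S_module E w act) nu sigma rho d1 a1 b1 (v : int -> int -> M)
  (gf : good_family w act nu sigma rho d1 a1 b1 v) a e p q :
  a != 0 -> pair E a e = 0 -> a = sigma *~ p + rho *~ q ->
  exists c : int -> int -> F, forall i k, act a e (v i k) = c i k *: v (i + p) (k + q).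
Proof.
move=> ha he hapq.
apply: (@fchoice2 _ _ (fun i k => act a e (v i k)) (fun s i k => s *: v (i + p) (k + q))) => i k.
have [[_ hv] _ _ _ _] := gf i k.
have [[vnz hv'] _ _ _ _] := gf (i + p) (k + q).
have := homog_act G ha he hv; rewrite hapq gidx_shift => h.
exact: shift_coef h hv' vnz.
Qed.

Lemma sc_eq (F : fieldType) (a x y : F) : a != 0 -> x * a - a * y = 0 -> y = x.
Proof. by move=> ha /eqP; rewrite mulrC -mulrBr mulf_eq0 (negbTE ha) subr_eq0 => /eqP. Qed.

Lemma sc_step (F : fieldType) (b x y c : F) : b != 0 -> x * b - b * y = - c -> y = x + c / b.
Proof.
move=> hb h; have -> : c = b * y - x * b by rewrite -[c]opprK -h opprB.
by field; rewrite hb.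
Qed.

Unset Implicit Arguments. Set Strict Implicit.
Set Implicit Arguments.
Arguments coef0 {F V s u} _ _.
Arguments coef_eq {F V s t u} _ _.
Arguments sc_eq {F a x y} _ _.
Arguments sc_step {F b x y c} _ _.
Arguments lin_ind {R} f {dl} _ _.

Lemma part2 (F : fieldType) (E : 'M[F]_3) (M : lmodType F) w act
  (G : graded_S_module E w act) (sigma rho nu : 'rV[int]_3) (d1 d2 d3 : 'rV[F]_3) (a1 b1 : F)
  (v : int -> int -> M) (a2 a3 d : F) :
  (forall p q : int, sigma *~ p + rho *~ q = 0 -> p = 0 /\ q = 0) ->
  pair E sigma d1 = 0 -> pair E rho d1 = 0 ->
  pair E sigma d2 = 0 -> pair E rho d2 != 0 ->
  pair E rho d3 = 0 -> pair E sigma d3 != 0 ->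
  a1 != 0 -> b1 != 0 ->
  good_family w act nu sigma rho d1 a1 b1 v ->
  act sigma d2 (v 0 0) = a2 *: v 1 0 ->
  act rho d3 (v 0 0) = a3 *: v 0 1 ->
  act (sigma + rho) d1 (v 0 0) = d *: v 1 1 ->
  [/\ forall i k : int,
        [/\ act (sigma + rho) d1 (v i k) = d *: v (i + 1) (k + 1),
            act sigma d2 (v i k)
              = (a2 + k%:~R * pair E rho d2 * d / b1) *: v (i + 1) k,
            act (- sigma) d2 (v i k)
              = (a2 + k%:~R * pair E rho d2 * d / b1) *: v (i - 1) k,
            act rho d3 (v i k)
              = (a3 + i%:~R * pair E sigma d3 * d / a1) *: v i (k + 1) &
            act (- rho) d3 (v i k)
              = (a3 + i%:~R * pair E sigma d3 * d / a1) *: v i (k - 1)],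
      a1 ^+ 2 = d ^+ 2 &
      b1 ^+ 2 = d ^+ 2].
Proof.
move=> ind ps1 pr1 ps2 c2nz pr3 c3nz a1nz b1nz gf hA hB hT.
set c2 := pair E rho d2; set c3 := pair E sigma d3.
have NZ p q : (p != 0) || (q != 0) -> sigma *~ p + rho *~ q != 0.
  by move=> h; apply/eqP => /ind [hp hq]; move: h; rewrite hp hq.
have sn : sigma != 0 by have := NZ 1 0 isT; rewrite mulr1z mulr0z addr0.
have rn : rho != 0 by have := NZ 0 1 isT; rewrite mulr1z mulr0z add0r.
have sN : - sigma != 0 by rewrite oppr_eq0.
have rN : - rho != 0 by rewrite oppr_eq0.
have srn : sigma + rho != 0 by have := NZ 1 1 isT; rewrite !mulr1z.
have rsn : rho + sigma != 0 by rewrite addrC.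
have rsN : rho + - sigma != 0 by have := NZ (-1) 1 isT; rewrite mulr1z mulrN1z addrC.
have sNr : - sigma + rho != 0 by rewrite addrC.
have srN : sigma + - rho != 0 by have := NZ 1 (-1) isT; rewrite mulr1z mulrN1z.
have rNs : - rho + sigma != 0 by rewrite addrC.
have e1 : sigma + rho + - sigma = rho by rewrite addrC addKr.
have e2 : sigma + rho + - rho = sigma by rewrite addrK.
have e3 : rho + sigma + - sigma = rho by rewrite addrK.
have e1n : sigma + rho + - sigma != 0 by rewrite e1.
have e2n : sigma + rho + - rho != 0 by rewrite e2.
have e3n : rho + sigma + - sigma != 0 by rewrite e3.
have psN1 : pair E (- sigma) d1 = 0 by rewrite pairN ps1 oppr0.
have prN1 : pair E (- rho) d1 = 0 by rewrite pairN pr1 oppr0.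
have psr1 : pair E (sigma + rho) d1 = 0 by rewrite pairD ps1 pr1 addr0.
have psN2 : pair E (- sigma) d2 = 0 by rewrite pairN ps2 oppr0.
have prN3 : pair E (- rho) d3 = 0 by rewrite pairN pr3 oppr0.
have psNr1 : pair E (- sigma + rho) d1 = 0 by rewrite pairD psN1 pr1 addr0.
have psrN1 : pair E (sigma + - rho) d1 = 0 by rewrite pairD ps1 prN1 addr0.
have vnz i k : v i k != 0 by case: (gf i k) => [[]].
have lZ a e : forall (c : F) (m : M), act a e (c *: m) = c *: act a e m := actZ G a e.
have hXp i k : act sigma d1 (v i k) = (fun _ _ => a1) i k *: v (i + 1) (k + 0).
  by rewrite addr0; case: (gf i k).
have hXm i k : act (- sigma) d1 (v i k) = (fun _ _ => a1) i k *: v (i + -1) (k + 0).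
  by rewrite addr0; case: (gf i k).
have hZp i k : act rho d1 (v i k) = (fun _ _ => b1) i k *: v (i + 0) (k + 1).
  by rewrite addr0; case: (gf i k).
have hZm i k : act (- rho) d1 (v i k) = (fun _ _ => b1) i k *: v (i + 0) (k + -1).
  by rewrite addr0; case: (gf i k).
have [cT hT'] := ex_coef G gf (1) (1) srn psr1 ltac:(by rewrite !mulr1z).
have [cA hA'] := ex_coef G gf (1) (0) sn ps2 ltac:(by rewrite mulr1z mulr0z addr0).
have [cA' hA''] := ex_coef G gf (-1) (0) sN psN2 ltac:(by rewrite mulrN1z mulr0z addr0).
have [cB hB'] := ex_coef G gf (0) (1) rn pr3 ltac:(by rewrite mulr1z mulr0z add0r).
have [cB' hB''] := ex_coef G gf (0) (-1) rN prN3 ltac:(by rewrite mulrN1z mulr0z add0r).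
have [cU hU] := ex_coef G gf (-1) (1) sNr psNr1 ltac:(by rewrite mulrN1z mulr1z).
have [cV hV] := ex_coef G gf (1) (-1) srN psrN1 ltac:(by rewrite mulrN1z mulr1z).
have eTX i k : cT (i + 1) k = cT i k.
  have := comm_shift (lZ _ _) (lZ _ _) hT' hXp i k.
  rewrite (comm G) // subrr /= => /esym /(coef0 (vnz _ _)).
  by rewrite addr0 => /(sc_eq a1nz).
have eTZ i k : cT i (k + 1) = cT i k.
  have := comm_shift (lZ _ _) (lZ _ _) hT' hZp i k.
  rewrite (comm G) // subrr /= => /esym /(coef0 (vnz _ _)).
  by rewrite addr0 => /(sc_eq b1nz).
have cT00 : cT 0 0 = d.
  by apply: (coef_eq (vnz 1 1)); rewrite -hT hT' !add0r.
have cTE i k : cT i k = d.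
  have h1 := lin_ind (fun i => cT i k) (dl := 0) (fun i => etrans (eTX i k) (esym (addr0 _))).
  have h2 := lin_ind (fun k => cT 0 k) (dl := 0) (fun k => etrans (eTZ 0 k) (esym (addr0 _))).
  by rewrite h1 /= h2 /= !mulr0 !addr0.
have eAX i k : cA (i + 1) k = cA i k.
  have := comm_shift (lZ _ _) (lZ _ _) hA' hXp i k.
  rewrite (comm G) // subrr /= => /esym /(coef0 (vnz _ _)).
  by rewrite addr0 => /(sc_eq a1nz).
have eAZ i k : cA i (k + 1) = cA i k + c2 * d / b1.
  have := comm_shift (lZ _ _) (lZ _ _) hA' hZp i k.
  rewrite (brk1 G) // (addrC rho sigma) hT' cTE /= !addr0 scalerA.
  by move/(coef_eq (vnz _ _))/esym; rewrite mulNr => /(sc_step b1nz).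
have cA00 : cA 0 0 = a2.
  by apply: (coef_eq (vnz 1 0)); rewrite -hA hA' add0r addr0.
have cAE i k : cA i k = a2 + k%:~R * (c2 * d / b1).
  have h1 := lin_ind (fun i => cA i k) (fun i => etrans (eAX i k) (esym (addr0 _))).
  have h2 := lin_ind (fun k => cA 0 k) (fun k => eAZ 0 k).
  by rewrite h1 /= h2 /= mulr0 addr0 cA00.
have eA'X i k : cA' (i + 1) k = cA' i k.
  have := comm_shift (lZ _ _) (lZ _ _) hA'' hXp i k.
  rewrite (comm G) // subrr /= => /esym /(coef0 (vnz _ _)).
  by rewrite addr0 => /(sc_eq a1nz).
have rA'T i k : cA' i k * d - d * cA' i (k + 1) = - (c2 * b1).
  have := comm_shift (lZ _ _) (lZ _ _) hA'' hT' i k.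
  rewrite (brk1 G) // e1 hZp /= pairD ps2 add0r !cTE eA'X scalerA !addr0 subrK.
  by move/(coef_eq (vnz _ _))/esym; rewrite mulNr.
have dnz : d != 0.
  apply/eqP => d0; have := rA'T 0 0; rewrite d0 mulr0 mul0r subrr => /eqP.
  by rewrite eq_sym oppr_eq0 mulf_eq0 (negbTE c2nz) (negbTE b1nz).
have cA'E i k : cA' i k = cA' 0 0 + k%:~R * (c2 * b1 / d).
  have h1 := lin_ind (fun i => cA' i k) (fun i => etrans (eA'X i k) (esym (addr0 _))).
  have h2 := lin_ind (fun k => cA' 0 k) (fun k => sc_step dnz (rA'T 0 k)).
  by rewrite h1 /= h2 /= mulr0 addr0.
have eBZ i k : cB i (k + 1) = cB i k.
  have := comm_shift (lZ _ _) (lZ _ _) hB' hZp i k.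
  rewrite (comm G) // subrr /= => /esym /(coef0 (vnz _ _)).
  by rewrite addr0 => /(sc_eq b1nz).
have eBX i k : cB (i + 1) k = cB i k + c3 * d / a1.
  have := comm_shift (lZ _ _) (lZ _ _) hB' hXp i k.
  rewrite (brk1 G) // hT' cTE /= !addr0 scalerA.
  by move/(coef_eq (vnz _ _))/esym; rewrite mulNr => /(sc_step a1nz).
have cB00 : cB 0 0 = a3.
  by apply: (coef_eq (vnz 0 1)); rewrite -hB hB' !add0r.
have cBE i k : cB i k = a3 + i%:~R * (c3 * d / a1).
  have h1 := lin_ind (fun k => cB i k) (fun k => etrans (eBZ i k) (esym (addr0 _))).
  have h2 := lin_ind (fun i => cB i 0) (fun i => eBX i 0).
  by rewrite h1 /= h2 /= mulr0 addr0 cB00.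
have eB'Z i k : cB' i (k + 1) = cB' i k.
  have := comm_shift (lZ _ _) (lZ _ _) hB'' hZp i k.
  rewrite (comm G) // subrr /= => /esym /(coef0 (vnz _ _)).
  by rewrite addr0 => /(sc_eq b1nz).
have rB'T i k : cB' i k * d - d * cB' (i + 1) k = - (c3 * a1).
  have := comm_shift (lZ _ _) (lZ _ _) hB'' hT' i k.
  rewrite (brk1 G) // e2 hXp /= pairD pr3 addr0 !cTE eB'Z scalerA !addr0 subrK.
  by move/(coef_eq (vnz _ _))/esym; rewrite mulNr.
have cB'E i k : cB' i k = cB' 0 0 + i%:~R * (c3 * a1 / d).
  have h1 := lin_ind (fun k => cB' i k) (fun k => etrans (eB'Z i k) (esym (addr0 _))).
  have h2 := lin_ind (fun i => cB' i 0) (fun i => sc_step dnz (rB'T i 0)).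
  by rewrite h1 /= h2 /= mulr0 addr0.
have rU1 i k : cA' i k * b1 - b1 * cA' i (k + 1) = - c2 * cU i k.
  have := comm_shift (lZ _ _) (lZ _ _) hA'' hZp i k.
  rewrite (brk1 G) // (addrC rho (- sigma)) hU /= scalerA !addr0.
  by move/(coef_eq (vnz _ _)).
have rU2 i k : cB i k * a1 - a1 * cB (i - 1) k = c3 * cU i k.
  have := comm_shift (lZ _ _) (lZ _ _) hB' hXm i k.
  rewrite (brk1 G) // hU /= scalerA !addr0 pairN opprK.
  by move/(coef_eq (vnz _ _)).
have c2nN : - c2 != 0 by rewrite oppr_eq0.
have u1 : cU 0 0 = b1 ^+ 2 / d.
  apply: (mulfI c2nN); rewrite -rU1 (cA'E 0 (0 + 1)) add0r ?mulr1z; field; by rewrite dnz.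
have u2 : cU 0 0 = d.
  apply: (mulfI c3nz); rewrite -rU2 !cBE ?sub0r ?intrN ?mulr0z ?mulr1z; rewrite /c3; field; by rewrite a1nz.
have hb2 : b1 ^+ 2 = d ^+ 2.
  by rewrite -(divfK dnz (b1 ^+ 2)) -u1 u2 expr2.
have rV1 i k : cB' i k * a1 - a1 * cB' (i + 1) k = - c3 * cV i k.
  have := comm_shift (lZ _ _) (lZ _ _) hB'' hXp i k.
  rewrite (brk1 G) // hV /= scalerA !addr0.
  by move/(coef_eq (vnz _ _)).
have rV2 i k : cA i k * b1 - b1 * cA i (k - 1) = c2 * cV i k.
  have := comm_shift (lZ _ _) (lZ _ _) hA' hZm i k.
  rewrite (brk1 G) // (addrC (- rho) sigma) hV /= scalerA !addr0 pairN opprK.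
  by move/(coef_eq (vnz _ _)).
have c3nN : - c3 != 0 by rewrite oppr_eq0.
have v1 : cV 0 0 = a1 ^+ 2 / d.
  apply: (mulfI c3nN); rewrite -rV1 (cB'E (0 + 1) 0) add0r ?mulr1z; field; by rewrite dnz.
have v2 : cV 0 0 = d.
  apply: (mulfI c2nz); rewrite -rV2 !cAE ?sub0r ?intrN ?mulr0z ?mulr1z /c2; field; by rewrite b1nz.
have ha2 : a1 ^+ 2 = d ^+ 2.
  by rewrite -(divfK dnz (a1 ^+ 2)) -v1 v2 expr2.
have bd' : c2 * d / b1 = c2 * b1 / d.
  apply/eqP; rewrite -subr_eq0.
  have -> : c2 * d / b1 - c2 * b1 / d = c2 * (d ^+ 2 - b1 ^+ 2) / (b1 * d).
    by rewrite /c2; field; rewrite dnz b1nz.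
  by rewrite hb2 subrr mulr0 mul0r.
have ad' : c3 * d / a1 = c3 * a1 / d.
  apply/eqP; rewrite -subr_eq0.
  have -> : c3 * d / a1 - c3 * a1 / d = c3 * (d ^+ 2 - a1 ^+ 2) / (a1 * d).
    by rewrite /c3; field; rewrite dnz a1nz.
  by rewrite ha2 subrr mulr0 mul0r.
pose D5 := pair E sigma d3 *: d2 - pair E rho d2 *: d3.
pose pP i k := cA i k * cB (i + 1) k - cB i k * cA i (k + 1).
have hP i k : act (rho + sigma) D5 (v i k) = pP i k *: v (i + 1) (k + 1).
  rewrite -(brkg G) //.
  have := comm_shift (lZ _ _) (lZ _ _) hA' hB' i k.
  by rewrite !addr0.
have pD5 : pair E (rho + sigma) D5 = 0.
  rewrite /D5 pairB !pairZ !pairD pr3 ps2 addr0 add0r; rewrite /c2 /c3; ring.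
have psD5 : pair E (- sigma) D5 = c2 * c3.
  rewrite /D5 pairN pairB !pairZ ps2 mulr0 sub0r opprK; rewrite /c2 /c3; ring.
have rP i k : cA' i k * pP (i - 1) k - pP i k * cA' (i + 1) (k + 1) = c2 * c2 * cB i k.
  have := comm_shift (lZ _ _) (lZ _ _) hA'' hP i k.
  rewrite (brkg G) // e3 psD5 pairD ps2 addr0.
  have -> : (c2 * c3) *: d2 - pair E rho d2 *: D5 = (c2 * c2) *: d3.
    by rewrite /D5 scalerBr !scalerA opprB addrC subrK.
  rewrite (actZd G) // hB' scalerA !addr0 subrK.
  by move/(coef_eq (vnz _ _)).
have cA'00 : cA' 0 0 = a2.
  have := rP 0 0; rewrite /pP (cA'E 1 1) !cAE !cBE.
  rewrite ?add0r ?sub0r ?intrD ?intrN ?mulr0z ?mulr1z => eq.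
  move/eqP: eq; rewrite -subr_eq0 => /eqP eq.
  set x := cA' 0 0 in eq *.
  have key : (c3 * d / a1) * (c2 * b1 / d) * (x - a2)
      + (c3 * d / a1) * x * c2 * (d ^+ 2 - b1 ^+ 2) / (b1 * d) = 0.
    by apply: (etrans _ eq); rewrite /c2 /c3; field; rewrite ?dnz ?a1nz ?b1nz.
  move: key; rewrite hb2 subrr mulr0 mul0r addr0 => /eqP.
  rewrite !mulf_eq0 !invr_eq0 (negbTE c2nz) (negbTE c3nz) (negbTE dnz) (negbTE a1nz).
  by rewrite (negbTE b1nz) /= subr_eq0 => /eqP.
pose D6 := pair E rho d2 *: d3 - pair E sigma d3 *: d2.
pose qQ i k := cB i k * cA i (k + 1) - cA i k * cB (i + 1) k.
have hQ i k : act (sigma + rho) D6 (v i k) = qQ i k *: v (i + 1) (k + 1).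
  rewrite -(brkg G) //.
  have := comm_shift (lZ _ _) (lZ _ _) hB' hA' i k.
  by rewrite !addr0.
have pD6 : pair E (sigma + rho) D6 = 0.
  rewrite /D6 pairB !pairZ !pairD pr3 ps2 addr0 add0r; rewrite /c2 /c3; ring.
have prD6 : pair E (- rho) D6 = c3 * c2.
  rewrite /D6 pairN pairB !pairZ pr3 mulr0 sub0r opprK; rewrite /c2 /c3; ring.
have rQ i k : cB' i k * qQ i (k - 1) - qQ i k * cB' (i + 1) (k + 1) = c3 * c3 * cA i k.
  have := comm_shift (lZ _ _) (lZ _ _) hB'' hQ i k.
  rewrite (brkg G) // e2 prD6 pairD pr3 addr0.
  have -> : (c3 * c2) *: d3 - pair E sigma d3 *: D6 = (c3 * c3) *: d2.
    by rewrite /D6 scalerBr !scalerA opprB addrC subrK.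
  rewrite (actZd G) // hA' scalerA !addr0 subrK.
  by move/(coef_eq (vnz _ _)).
have cB'00 : cB' 0 0 = a3.
  have := rQ 0 0; rewrite /qQ (cB'E 1 1) !cAE !cBE.
  rewrite ?add0r ?sub0r ?intrD ?intrN ?mulr0z ?mulr1z => eq.
  move/eqP: eq; rewrite -subr_eq0 => /eqP eq.
  set x := cB' 0 0 in eq *.
  have key : (c2 * d / b1) * (c3 * a1 / d) * (x - a3)
      + (c2 * d / b1) * x * c3 * (d ^+ 2 - a1 ^+ 2) / (a1 * d) = 0.
    by apply: (etrans _ eq); rewrite /c2 /c3; field; rewrite ?dnz ?a1nz ?b1nz.
  move: key; rewrite ha2 subrr mulr0 mul0r addr0 => /eqP.
  rewrite !mulf_eq0 !invr_eq0 (negbTE c2nz) (negbTE c3nz) (negbTE dnz) (negbTE a1nz).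
  by rewrite (negbTE b1nz) /= subr_eq0 => /eqP.
split => // i k; split.
- by rewrite hT' cTE.
- by rewrite hA' cAE addr0 !mulrA.
- by rewrite hA'' cA'E cA'00 addr0 -bd' !mulrA.
- by rewrite hB' cBE addr0 !mulrA.
- by rewrite hB'' cB'E cB'00 addr0 -ad' !mulrA.
Qed.

Unset Implicit Arguments. Set Strict Implicit.
Set Implicit Arguments. Unset Strict Implicit.

Definition pw (F : fieldType) (M : lmodType F) (X Y : M -> M) (a : F) (i : int) (m : M) : M :=
  match i with
  | Posz n => (a ^+ n)^-1 *: iter n X m
  | Negz n => (a ^+ n.+1)^-1 *: iter n.+1 Y m
  end.

Lemma iter_lin (F : fieldType) (M : lmodType F) (X : M -> M) n c m :
  (forall c m, X (c *: m) = c *: X m) -> iter n X (c *: m) = c *: iter n X m.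
Proof. by move=> lX; elim: n => //= n ->; rewrite lX. Qed.

Lemma iter_comm (F : fieldType) (M : lmodType F) (X O : M -> M) n m :
  (forall m, O (X m) = X (O m)) -> O (iter n X m) = iter n X (O m).
Proof. by move=> h; elim: n => //= n <-; rewrite h. Qed.

Lemma pw_lin (F : fieldType) (M : lmodType F) (X Y : M -> M) a i c m :
  (forall c m, X (c *: m) = c *: X m) -> (forall c m, Y (c *: m) = c *: Y m) ->
  pw X Y a i (c *: m) = c *: pw X Y a i m.
Proof.
by move=> lX lY; case: i => n /=; rewrite iter_lin // ?lY !scalerA [c * _]mulrC.
Qed.

Lemma pw_comm (F : fieldType) (M : lmodType F) (X Y O : M -> M) a i m :
  (forall c m, O (c *: m) = c *: O m) ->
  (forall m, O (X m) = X (O m)) -> (forall m, O (Y m) = Y (O m)) ->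
  O (pw X Y a i m) = pw X Y a i (O m).
Proof. by move=> lO hX hY; rewrite /pw; case: i => n; rewrite lO iter_comm. Qed.

Lemma pw_up (F : fieldType) (M : lmodType F) (X Y : M -> M) a i m :
  a != 0 -> (forall c m, X (c *: m) = c *: X m) ->
  (forall n, X (Y (iter n Y m)) = a ^+ 2 *: iter n Y m) ->
  X (pw X Y a i m) = a *: pw X Y a (i + 1) m.
Proof.
move=> an lX hXY; case: i => n.
  have -> : Posz n + 1 = Posz n.+1 by lia.
  rewrite /= lX scalerA; congr (_ *: _).
  by rewrite exprS invfM mulrA mulfV // mul1r.
case: n => [|n].
  have -> : Negz 0 + 1 = 0 by [].
  by rewrite /= lX (hXY 0) !scalerA expr1 expr0 invr1 mulr1 expr2 mulrA mulVf // mul1r.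
have -> : Negz n.+1 + 1 = Negz n by rewrite !NegzE; lia.
rewrite /= lX (hXY n.+1) /= !scalerA; congr (_ *: _).
by rewrite !exprS; field; rewrite ?expf_neq0 ?an.
Qed.

Lemma pw_down (F : fieldType) (M : lmodType F) (X Y : M -> M) a i m :
  a != 0 -> (forall c m, Y (c *: m) = c *: Y m) ->
  (forall n, Y (X (iter n X m)) = a ^+ 2 *: iter n X m) ->
  Y (pw X Y a i m) = a *: pw X Y a (i - 1) m.
Proof.
move=> an lY hYX; case: i => n.
  case: n => [|n].
    have -> : Posz 0 - 1 = Negz 0 by [].
    by rewrite /= lY !scalerA expr0 invr1 expr1 mulfV.
  have -> : Posz n.+1 - 1 = Posz n by lia.
  rewrite /= lY (hYX n) !scalerA; congr (_ *: _).
  by rewrite !exprS; field; rewrite ?expf_neq0 ?an.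
have -> : Negz n - 1 = Negz n.+1 by rewrite !NegzE; lia.
rewrite /= lY !scalerA; congr (_ *: _).
by rewrite !exprS; field; rewrite ?expf_neq0 ?an.
Qed.

Lemma pw_nz (F : fieldType) (M : lmodType F) (X Y : M -> M) a m :
  a != 0 -> m != 0 -> X 0 = 0 -> Y 0 = 0 ->
  (forall i, X (pw X Y a i m) = a *: pw X Y a (i + 1) m) ->
  (forall i, Y (pw X Y a i m) = a *: pw X Y a (i - 1) m) ->
  forall i, pw X Y a i m != 0.
Proof.
move=> an mn X0 Y0 hup hdn i0; apply/eqP => h0.
have all0 j : pw X Y a (i0 + j) m = 0.
  elim/int_rec: j => [|n IH|n IH]; first by rewrite addr0.
    have := hup (i0 + n); rewrite IH X0 => /esym /eqP.
    rewrite scaler_eq0 (negbTE an) /= => /eqP.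
    by have -> : i0 + n + 1 = i0 + n.+1 by lia.
  have := hdn (i0 - n%:Z); rewrite IH Y0 => /esym /eqP.
  rewrite scaler_eq0 (negbTE an) /= => /eqP.
  by have -> : i0 - n%:Z - 1 = i0 + - (n.+1 : int) by lia.
have := all0 (- i0); rewrite addrN /= expr0 invr1 scale1r => /eqP.
by rewrite (negbTE mn).
Qed.

Lemma homogZ (F : fieldType) (M : lmodType F) (w : 'rV[int]_3 -> M) theta c m :
  homog w theta m -> homog w theta (c *: m).
Proof. by case=> c' ->; exists (c * c'); rewrite scalerA. Qed.

Lemma iter_homog (F : fieldType) (M : lmodType F) (w : 'rV[int]_3 -> M) (X : M -> M) s theta m (n : nat) :
  (forall theta m, homog w theta m -> homog w (s + theta) (X m)) ->
  homog w theta m -> homog w (theta + s *~ n) (iter n X m).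
Proof.
move=> hX hm; elim: n => [|n IH]; first by rewrite mulr0z addr0.
have -> : theta + s *~ n.+1 = s + (theta + s *~ n).
  by rewrite -[n.+1]addn1 PoszD mulrzDr mulr1z addrA [RHS]addrC.
exact: hX.
Qed.

Lemma pw_homog (F : fieldType) (M : lmodType F) (w : 'rV[int]_3 -> M) (X Y : M -> M) a s theta m i :
  (forall theta m, homog w theta m -> homog w (s + theta) (X m)) ->
  (forall theta m, homog w theta m -> homog w (- s + theta) (Y m)) ->
  homog w theta m -> homog w (theta + s *~ i) (pw X Y a i m).
Proof.
move=> hX hY hm; case: i => n /=; apply: homogZ.
  exact: iter_homog.
have -> : s *~ Negz n = (- s) *~ n.+1 by rewrite NegzE mulrNz mulNrz.
exact: iter_homog.
Qed.

Unset Implicit Arguments. Set Strict Implicit.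
Set Implicit Arguments. Unset Strict Implicit.

Lemma part1 (F : fieldType) (E : 'M[F]_3) (M : lmodType F) w act
  (G : graded_S_module E w act) (sigma rho nu : 'rV[int]_3) (d1 : 'rV[F]_3) (a1 b1 : F) :
  (forall p q : int, sigma *~ p + rho *~ q = 0 -> p = 0 /\ q = 0) ->
  pair E sigma d1 = 0 -> pair E rho d1 = 0 -> a1 != 0 -> b1 != 0 ->
  act (- sigma) d1 (act sigma d1 (w nu)) = a1 ^+ 2 *: w nu ->
  act (- rho) d1 (act rho d1 (w nu)) = b1 ^+ 2 *: w nu ->
  exists v : int -> int -> M, good_family w act nu sigma rho d1 a1 b1 v.
Proof.
move=> ind ps1 pr1 a1nz b1nz hYX hWZ.
have NZ p q : (p != 0) || (q != 0) -> sigma *~ p + rho *~ q != 0.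
  by move=> h; apply/eqP => /ind [hp hq]; move: h; rewrite hp hq.
have sn : sigma != 0 by have := NZ 1 0 isT; rewrite mulr1z mulr0z addr0.
have rn : rho != 0 by have := NZ 0 1 isT; rewrite mulr1z mulr0z add0r.
have sN : - sigma != 0 by rewrite oppr_eq0.
have rN : - rho != 0 by rewrite oppr_eq0.
have psN1 : pair E (- sigma) d1 = 0 by rewrite pairN ps1 oppr0.
have prN1 : pair E (- rho) d1 = 0 by rewrite pairN pr1 oppr0.
have lin a (c : F) (m : M) : act a d1 (c *: m) = c *: act a d1 m := actZ G a d1 c m.
have zer a : act a d1 0 = 0 by have := lin a 0 0; rewrite !scale0r.
have C a b m : a != 0 -> b != 0 -> pair E a d1 = 0 -> pair E b d1 = 0 ->
    act a d1 (act b d1 m) = act b d1 (act a d1 m).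
  by move=> *; apply: (comm G).
pose Good (m : M) := [/\ (act sigma d1) ((act (- sigma) d1) m) = a1 ^+ 2 *: m, (act (- sigma) d1) ((act sigma d1) m) = a1 ^+ 2 *: m,
                        (act rho d1) ((act (- rho) d1) m) = b1 ^+ 2 *: m & (act (- rho) d1) ((act rho d1) m) = b1 ^+ 2 *: m].
have gw : Good (w nu).
  by split => //; rewrite C.
have gcl a m : a != 0 -> pair E a d1 = 0 -> Good m -> Good (act a d1 m).
  move=> ha hp [h1 h2 h3 h4]; split.
  - by rewrite -(C a) // -(C a) // h1 lin.
  - by rewrite -(C a) // -(C a) // h2 lin.
  - by rewrite -(C a) // -(C a) // h3 lin.
  - by rewrite -(C a) // -(C a) // h4 lin.
have gZ c m : Good m -> Good (c *: m).
  by case=> h1 h2 h3 h4; split; rewrite !lin ?h1 ?h2 ?h3 ?h4 !scalerA mulrC.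
have gitX n m : Good m -> Good (iter n (act sigma d1) m) by move=> gm; elim: n => //= n IH; apply: gcl.
have gitY n m : Good m -> Good (iter n (act (- sigma) d1) m) by move=> gm; elim: n => //= n IH; apply: gcl.
have gitZ n m : Good m -> Good (iter n (act rho d1) m) by move=> gm; elim: n => //= n IH; apply: gcl.
have gitW n m : Good m -> Good (iter n (act (- rho) d1) m) by move=> gm; elim: n => //= n IH; apply: gcl.
have gpwZ k : Good (pw (act rho d1) (act (- rho) d1) b1 k (w nu)).
  by rewrite /pw; case: k => n; apply: gZ; [apply: gitZ | apply: gitW].
have gpw i k : Good (pw (act sigma d1) (act (- sigma) d1) a1 i (pw (act rho d1) (act (- rho) d1) b1 k (w nu))).
  by rewrite /pw; case: i => n; apply: gZ; [apply: gitX | apply: gitY]; apply: gpwZ.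
have wnz : w nu != 0 := proj1 (proj2 (proj2 (proj2 (proj2 G)))) nu.
have upZ k : act rho d1 (pw (act rho d1) (act (- rho) d1) b1 k (w nu))
    = b1 *: pw (act rho d1) (act (- rho) d1) b1 (k + 1) (w nu).
  by apply: pw_up => // n; case: (gitW n _ gw).
have dnZ k : act (- rho) d1 (pw (act rho d1) (act (- rho) d1) b1 k (w nu))
    = b1 *: pw (act rho d1) (act (- rho) d1) b1 (k - 1) (w nu).
  by apply: pw_down => // n; case: (gitZ n _ gw).
pose m0 k := pw (act rho d1) (act (- rho) d1) b1 k (w nu).
have m0nz k : m0 k != 0.
  by apply: pw_nz.
have upX i k : act sigma d1 (pw (act sigma d1) (act (- sigma) d1) a1 i (m0 k))
    = a1 *: pw (act sigma d1) (act (- sigma) d1) a1 (i + 1) (m0 k).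
  by apply: pw_up => // n; case: (gitY n _ (gpwZ k)).
have dnX i k : act (- sigma) d1 (pw (act sigma d1) (act (- sigma) d1) a1 i (m0 k))
    = a1 *: pw (act sigma d1) (act (- sigma) d1) a1 (i - 1) (m0 k).
  by apply: pw_down => // n; case: (gitX n _ (gpwZ k)).
exists (fun i k => pw (act sigma d1) (act (- sigma) d1) a1 i (m0 k)) => i k; split.
- split; first by apply: pw_nz.
  have hw : homog w nu (w nu) by exists 1; rewrite scale1r.
  have h1 := pw_homog (X := act rho d1) (Y := act (- rho) d1) b1 k
    (fun th m => homog_act G rn pr1 (theta := th) (m := m))
    (fun th m => homog_act G rN prN1 (theta := th) (m := m)) hw.
  have h2 := pw_homog (X := act sigma d1) (Y := act (- sigma) d1) a1 i
    (fun th m => homog_act G sn ps1 (theta := th) (m := m))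
    (fun th m => homog_act G sN psN1 (theta := th) (m := m)) h1.
  by move: h2; rewrite /gidx addrAC.
- exact: upX.
- exact: dnX.
- rewrite pw_comm ?upZ ?pw_lin //; try by move=> *; apply: C.
- rewrite pw_comm ?dnZ ?pw_lin //; try by move=> *; apply: C.
Qed.

Unset Implicit Arguments. Set Strict Implicit.
Theorem lemma3p2 (F : closedFieldType) (E : 'M[F]_3) (M : lmodType F)
  (w : 'rV[int]_3 -> M) (act : 'rV[int]_3 -> 'rV[F]_3 -> M -> M)
  (sigma rho nu : 'rV[int]_3) (d1 d2 d3 : 'rV[F]_3) (a1 b1 : F) :
  [pchar F] =i pred0 ->
  Zindep_gens E -> separating E ->
  graded_S_module E w act ->
  (forall p q : int, sigma *~ p + rho *~ q = 0 -> p = 0 /\ q = 0) ->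
  d1 != 0 -> pair E sigma d1 = 0 -> pair E rho d1 = 0 ->
  pair E sigma d2 = 0 -> ~ (exists c : F, d2 = c *: d1) ->
  pair E rho d3 = 0 -> ~ (exists c : F, d3 = c *: d1) ->
  a1 != 0 -> b1 != 0 ->
  act (- sigma) d1 (act sigma d1 (w nu)) = a1 ^+ 2 *: w nu ->
  act (- rho) d1 (act rho d1 (w nu)) = b1 ^+ 2 *: w nu ->
  (exists v : int -> int -> M, good_family w act nu sigma rho d1 a1 b1 v) /\
  (forall (v : int -> int -> M) (a2 a3 d : F),
     good_family w act nu sigma rho d1 a1 b1 v ->
     act sigma d2 (v 0 0) = a2 *: v 1 0 ->
     act rho d3 (v 0 0) = a3 *: v 0 1 ->
     act (sigma + rho) d1 (v 0 0) = d *: v 1 1 ->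
     [/\ forall i k : int,
           [/\ act (sigma + rho) d1 (v i k) = d *: v (i + 1) (k + 1),
               act sigma d2 (v i k)
                 = (a2 + k%:~R * pair E rho d2 * d / b1) *: v (i + 1) k,
               act (- sigma) d2 (v i k)
                 = (a2 + k%:~R * pair E rho d2 * d / b1) *: v (i - 1) k,
               act rho d3 (v i k)
                 = (a3 + i%:~R * pair E sigma d3 * d / a1) *: v i (k + 1) &
               act (- rho) d3 (v i k)
                 = (a3 + i%:~R * pair E sigma d3 * d / a1) *: v i (k - 1)],
         a1 ^+ 2 = d ^+ 2 &
         b1 ^+ 2 = d ^+ 2]).
Proof.
move=> ch Zi sep G ind d1nz ps1 pr1 ps2 nd2 pr3 nd3 a1nz b1nz hX hZ.
have c2nz : pair E rho d2 != 0.
  by apply/eqP => h; apply: nd2; exact: (@ker2 _ _ _ _ _ _ ch sep ind d1nz ps1 pr1 ps2 h).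
have c3nz : pair E sigma d3 != 0.
  by apply/eqP => h; apply: nd3; exact: (@ker2 _ _ _ _ _ _ ch sep ind d1nz ps1 pr1 h pr3).
split; first exact: (part1 G ind ps1 pr1 a1nz b1nz hX hZ).
move=> v a2 a3 d gf hA hB hT.
exact: (part2 G a2 a3 d ind ps1 pr1 ps2 c2nz pr3 c3nz a1nz b1nz gf hA hB hT).
Qed.
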